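(* The Fermat–Torricelli problem for four non-coplanar points forming a tetrahedron in $\mathbb{R}^3$ is not in general solvable by Euclidean (straightedge-and-compass) constructions: there exist tetrahedra $A_1A_2A_3A_4$ in $\mathbb{R}^3$ whose Fermat–Torricelli point $A_0$ (the minimizer of $\sum_{i=1}^4\|A_0-A_i\|$) cannot be constructed from the vertices by a Euclidean construction, i.e. (for vertices with rational coordinates) some coordinate of $A_0$ is not a constructible number over $\mathbb{Q}$.
   Context: A real number is constructible over $\mathbb{Q}$ if it lies in a field obtained from $\mathbb{Q}$ by a finite tower of quadratic extensions; a point is constructible by Euclidean constructions from given points with rational coordinates exactly when its coordinates are constructible numbers. The Fermat–Torricelli point of four points $A_1,\dots,A_4\in\mathbb{R}^3$ is the unique minimizer over $A_0\in\mathbb{R}^3$ of $\sum_{i=1}^4\|A_0-A_i\|$. *)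

(* Defs.v *)
From Stdlib Require Import Reals QArith Qreals List.
Open Scope R_scope.

Record point3 := P3 { px : R; py : R; pz : R }.

Definition dist3 (a b : point3) : R :=
  sqrt ((px a - px b)^2 + (py a - py b)^2 + (pz a - pz b)^2).

Definition is_rational (x : R) : Prop := exists q : Q, Q2R q = x.

Definition rational_point (a : point3) : Prop :=
  is_rational (px a) /\ is_rational (py a) /\ is_rational (pz a).

Definition det3 (u v w : point3) : R :=
  px u * (py v * pz w - pz v * py w)
  - py u * (px v * pz w - pz v * px w)
  + pz u * (px v * py w - py v * px w).

Definition sub3 (a b : point3) : point3 :=
  P3 (px a - px b) (py a - py b) (pz a - pz b).

Definition non_coplanar (a1 a2 a3 a4 : point3) : Prop :=
  det3 (sub3 a2 a1) (sub3 a3 a1) (sub3 a4 a1) <> 0.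

Definition ft_sum (a1 a2 a3 a4 a0 : point3) : R :=
  dist3 a0 a1 + dist3 a0 a2 + dist3 a0 a3 + dist3 a0 a4.

Definition is_FT_point (a1 a2 a3 a4 a0 : point3) : Prop :=
  forall b : point3, ft_sum a1 a2 a3 a4 a0 <= ft_sum a1 a2 a3 a4 b.

Inductive in_gen_field (S : list R) : R -> Prop :=
| gf_rat : forall q : Q, in_gen_field S (Q2R q)
| gf_gen : forall a, In a S -> in_gen_field S a
| gf_add : forall x y, in_gen_field S x -> in_gen_field S y -> in_gen_field S (x + y)
| gf_opp : forall x, in_gen_field S x -> in_gen_field S (- x)
| gf_mul : forall x y, in_gen_field S x -> in_gen_field S y -> in_gen_field S (x * y)
| gf_inv : forall x, in_gen_field S x -> x <> 0 -> in_gen_field S (/ x).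

(* A list [a_1; ...; a_n] is a quadratic tower over Q when each a_k^2 lies in
   Q(a_1,...,a_{k-1}); then each step Q(a_1..a_{k-1}) ⊆ Q(a_1..a_k) has degree <= 2. *)
Fixpoint quadratic_tower_aux (prev : list R) (s : list R) : Prop :=
  match s with
  | nil => True
  | a :: s' => in_gen_field prev (a * a) /\ quadratic_tower_aux (prev ++ a :: nil) s'
  end.

Definition quadratic_tower (s : list R) : Prop := quadratic_tower_aux nil s.

Definition constructible (x : R) : Prop :=
  exists s : list R, quadratic_tower s /\ in_gen_field s x.

Definition constructible_point (a : point3) : Prop :=
  constructible (px a) /\ constructible (py a) /\ constructible (pz a).

(* Main.v *)
Require Import Defs.
From Stdlib Require Import Reals QArith Qreals List.
From Stdlib Require Import Lra Lia Psatz ZArith.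
From Stdlib Require QArith.Qcanon.
Open Scope R_scope.


Definition cub (z:R) : R := 2*z*z*z - 4*z*z - z + 1.

Lemma gen_nil : forall z, in_gen_field nil z -> exists q, z = Q2R q.
Proof.
  intros z H. induction H.
  - exists q; reflexivity.
  - destruct H.
  - destruct IHin_gen_field1 as [q1 ->]; destruct IHin_gen_field2 as [q2 ->].
    exists (q1+q2)%Q; rewrite Q2R_plus; reflexivity.
  - destruct IHin_gen_field as [q1 ->]. exists (-q1)%Q; rewrite Q2R_opp; reflexivity.
  - destruct IHin_gen_field1 as [q1 ->]; destruct IHin_gen_field2 as [q2 ->].
    exists (q1*q2)%Q; rewrite Q2R_mult; reflexivity.
  - destruct IHin_gen_field as [q1 ->]. exists (/q1)%Q.
    rewrite Q2R_inv; [reflexivity|].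
    intro Hq. apply H0. rewrite (Qeq_eqR _ _ Hq). unfold Q2R; simpl; lra.
Qed.

Lemma gf_IZR : forall S n, in_gen_field S (IZR n).
Proof.
  intros S n. replace (IZR n) with (Q2R (inject_Z n)).
  - apply gf_rat.
  - unfold Q2R; simpl. rewrite Rinv_1. ring.
Qed.

Ltac gf := first
  [ assumption
  | apply gf_IZR
  | match goal with
    | |- in_gen_field _ (_ + _) => apply gf_add; gf
    | |- in_gen_field _ (_ * _) => apply gf_mul; gf
    | |- in_gen_field _ (- _) => apply gf_opp; gf
    | |- in_gen_field _ (_ - _) => unfold Rminus; apply gf_add; [gf | apply gf_opp; gf]
    | |- in_gen_field _ (_ / _) => unfold Rdiv; apply gf_mul; [gf | apply gf_inv; [gf | assumption]]
    | |- in_gen_field _ (/ _) => apply gf_inv; [gf | assumption]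
    end ].

Lemma rep : forall prev a, in_gen_field prev (a*a) -> forall z,
  in_gen_field (prev ++ a::nil) z ->
  exists p r, in_gen_field prev p /\ in_gen_field prev r /\ z = p + r*a.
Proof.
  intros prev a Ha z Hz. induction Hz.
  - exists (Q2R q), 0. repeat split; [apply gf_rat | apply gf_IZR | ring].
  - apply in_app_or in H. destruct H as [H|H].
    + exists a0, 0. repeat split; [apply gf_gen; exact H | apply gf_IZR | ring].
    + destruct H as [H|H]; [|destruct H]. subst a0.
      exists 0, 1. repeat split; try apply gf_IZR. ring.
  - destruct IHHz1 as [p1 [r1 [Hp1 [Hr1 ->]]]].
    destruct IHHz2 as [p2 [r2 [Hp2 [Hr2 ->]]]].
    exists (p1+p2), (r1+r2). repeat split; try gf. ring.
  - destruct IHHz as [p1 [r1 [Hp1 [Hr1 ->]]]].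
    exists (-p1), (-r1). repeat split; try gf. ring.
  - destruct IHHz1 as [p1 [r1 [Hp1 [Hr1 ->]]]].
    destruct IHHz2 as [p2 [r2 [Hp2 [Hr2 ->]]]].
    exists (p1*p2 + r1*r2*(a*a)), (p1*r2+p2*r1). repeat split; try gf. ring.
  - destruct IHHz as [p [r [Hp [Hr Hx]]]]. subst x.
    destruct (Req_dec (p*p - r*r*(a*a)) 0) as [HN|HN].
    + destruct (Req_dec r 0) as [Hr0|Hr0].
      * exfalso. subst r. assert (p = 0) by nra. subst p. apply H. ring.
      * assert (Ha' : in_gen_field prev a).
        { assert (Hf : (a - p/r) * (a + p/r) = 0).
          { field_simplify; [|exact Hr0]. unfold Rdiv. replace (a^2*r^2 - p^2) with (-(p*p - r*r*(a*a))) by ring.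
            rewrite HN. ring. }
          apply Rmult_integral in Hf. destruct Hf as [Hf|Hf].
          - replace a with (p/r) by lra. gf.
          - replace a with (- (p/r)) by lra. gf. }
        exists (/(p + r*a)), 0. repeat split; try gf. ring.
    + exists (p / (p*p - r*r*(a*a))), (- r / (p*p - r*r*(a*a))).
      repeat split; try gf.
      field. split; [exact HN|].
      intro Hx. apply HN. replace (p*p - r*r*(a*a)) with ((p+r*a)*(p-r*a)) by ring.
      rewrite Hx; ring.
Qed.

Lemma descent : forall prev a, in_gen_field prev (a*a) -> forall z,
  in_gen_field (prev ++ a::nil) z -> cub z = 0 ->
  exists w, in_gen_field prev w /\ cub w = 0.
Proof.
  intros prev a Ha z Hz Hc.
  destruct (rep prev a Ha z Hz) as [p [r [Hp [Hr ->]]]].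
  remember (a*a) as s eqn:Hs.
  set (A := 2*(p*p*p + 3*p*r*r*s) - 4*(p*p + r*r*s) - p + 1).
  set (E := 6*p*p + 2*r*r*s - 8*p - 1).
  assert (Hk : cub (p + r*a) = A + r*E*a).
  { unfold cub, A, E. subst s. ring. }
  rewrite Hk in Hc.
  destruct (Req_dec (r*E) 0) as [HB|HB].
  - destruct (Req_dec r 0) as [Hr0|Hr0].
    + exists p. split; [exact Hp|]. assert (Hpp : p + r*a = p) by (rewrite Hr0; ring). rewrite <- Hpp, Hk. exact Hc.
    + assert (HE : E = 0).
      { apply Rmult_integral in HB. destruct HB; [contradiction|assumption]. }
      assert (HA : A = 0) by (rewrite HB in Hc; lra).
      exists (2 - 2*p). split.
      * unfold E in *. gf.
      * replace (cub (2 - 2*p)) with (A - (3*p-2)*E) by (unfold cub, A, E; ring).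
        rewrite HA, HE. ring.
  - assert (Ha' : a = - A / (r*E)).
    { replace a with ((A + r*E*a - A)/(r*E)) at 1 by (field; split; intro Hx; apply HB; rewrite Hx; ring). rewrite Hc. field; split; intro Hx; apply HB; rewrite Hx; ring. }
    exists (p + r*a). split.
    + rewrite Ha'. unfold A, E in *. gf.
    + rewrite Hk. exact Hc.
Qed.

Lemma tower : forall s prev, quadratic_tower_aux prev s -> forall z,
  in_gen_field (prev ++ s) z -> cub z = 0 ->
  exists w, in_gen_field prev w /\ cub w = 0.
Proof.
  induction s as [|a s IH]; intros prev Ht z Hz Hc.
  - rewrite app_nil_r in Hz. eauto.
  - destruct Ht as [Ha Ht].
    replace (prev ++ a :: s) with ((prev ++ a :: nil) ++ s) in Hz
      by (rewrite <- app_assoc; reflexivity).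
    destruct (IH _ Ht z Hz Hc) as [w [Hw Hcw]].
    exact (descent prev a Ha w Hw Hcw).
Qed.

Lemma no_rat_root : forall q, cub (Q2R q) <> 0.
Proof.
  intros q0 H.
  set (q := Qred q0).
  assert (Hq : Q2R q = Q2R q0) by (apply Qeq_eqR; apply Qred_correct).
  assert (Hg : Z.gcd (Qnum q) (QDen q) = 1%Z).
  { apply Qcanon.Qred_identity2. apply Qcanon.Qred_involutive. }
  rewrite <- Hq in H. clearbody q. destruct q as [n d]. simpl in Hg.
  unfold Q2R in H. simpl in H.
  set (dd := Z.pos d) in *.
  assert (Hd : (0 < dd)%Z) by (unfold dd; lia).
  assert (HdR : IZR dd <> 0) by (apply not_0_IZR; lia).
  assert (HZ : (2*n*n*n - 4*n*n*dd - n*dd*dd + dd*dd*dd = 0)%Z).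
  { apply eq_IZR. repeat rewrite ?minus_IZR, ?plus_IZR, ?mult_IZR.
    unfold cub in H.
    replace 0 with (0 * (IZR dd * IZR dd * IZR dd)) by ring.
    rewrite <- H. field. exact HdR. }
  clearbody dd.
  assert (Hn : (n | 1)%Z).
  { assert (H1 : (n | dd*(dd*dd))%Z).
    { exists (-2*n*n + 4*n*dd + dd*dd)%Z. lia. }
    assert (Hg' : Z.gcd n dd = 1%Z) by exact Hg.
    apply Z.gauss in H1; [|exact Hg'].
    apply Z.gauss in H1; [|exact Hg'].
    rewrite <- Hg'. apply Z.gcd_greatest; [apply Z.divide_refl | exact H1]. }
  assert (Hdd : (dd | 2)%Z).
  { assert (H1 : (dd | n*(n*(n*2)))%Z).
    { exists (4*n*n + n*dd - dd*dd)%Z. lia. }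
    assert (Hg' : Z.gcd dd n = 1%Z) by (rewrite Z.gcd_comm; exact Hg).
    apply Z.gauss in H1; [|exact Hg'].
    apply Z.gauss in H1; [|exact Hg'].
    apply Z.gauss in H1; [|exact Hg'].
    exact H1. }
  apply Z.divide_1_r in Hn.
  apply Z.divide_pos_le in Hdd; [|lia].
  assert (dd = 1 \/ dd = 2)%Z as [-> | ->] by lia;
  destruct Hn as [-> | ->]; lia.
Qed.

Lemma cub_not_constructible : forall z, cub z = 0 -> ~ constructible z.
Proof.
  intros z Hc [s [Ht Hz]].
  destruct (tower s nil Ht z Hz Hc) as [w [Hw Hcw]].
  destruct (gen_nil w Hw) as [q ->].
  exact (no_rat_root q Hcw).
Qed.

Definition dot (u v : point3) : R := px u * px v + py u * py v + pz u * pz v.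
Definition scal (c : R) (v : point3) : point3 := P3 (c * px v) (c * py v) (c * pz v).
Definition unitv (P a : point3) : point3 := scal (/ dist3 P a) (sub3 P a).
Definition gap (P a b : point3) : R := dist3 b a - dot (unitv P a) (sub3 b a).

Lemma dist_sq : forall P a, dist3 P a * dist3 P a = dot (sub3 P a) (sub3 P a).
Proof.
  intros P a. unfold dist3, dot, sub3; simpl.
  rewrite sqrt_sqrt. ring. apply Rplus_le_le_0_compat; [apply Rplus_le_le_0_compat|]; apply pow2_ge_0.
Qed.

Lemma dist_nonneg : forall P a, 0 <= dist3 P a.
Proof. intros; unfold dist3; apply sqrt_pos. Qed.

Lemma unit_self : forall P a, 0 < dist3 P a -> dot (unitv P a) (sub3 P a) = dist3 P a.
Proof.
  intros P a H. assert (Hs := dist_sq P a).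
  unfold unitv, scal, dot in *; simpl in *.
  apply (Rmult_eq_reg_l (dist3 P a)); [|lra].
  rewrite Hs. field. lra.
Qed.

Lemma unit_norm : forall P a, 0 < dist3 P a -> dot (unitv P a) (unitv P a) = 1.
Proof.
  intros P a H. assert (Hs := dist_sq P a).
  assert (E : dot (unitv P a) (unitv P a) = dot (sub3 P a) (sub3 P a) / (dist3 P a * dist3 P a))
    by (unfold unitv, scal, dot; simpl; field; lra).
  rewrite E, <- Hs. field. lra.
Qed.

Lemma cs_ge : forall u v, dot u u = 1 -> dot u v <= sqrt (dot v v).
Proof.
  intros u v Hu.
  destruct (Rle_or_lt (dot u v) 0) as [H|H].
  - pose proof (sqrt_pos (dot v v)). lra.
  - rewrite <- (sqrt_square (dot u v)) by lra.
    apply sqrt_le_1_alt.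
    assert (Hl : dot u u * dot v v - dot u v * dot u v =
      (px u * py v - py u * px v)^2 + (px u * pz v - pz u * px v)^2 +
      (py u * pz v - pz u * py v)^2) by (unfold dot; ring).
    rewrite Hu in Hl.
    pose proof (pow2_ge_0 (px u * py v - py u * px v)).
    pose proof (pow2_ge_0 (px u * pz v - pz u * px v)).
    pose proof (pow2_ge_0 (py u * pz v - pz u * py v)). lra.
Qed.

Lemma gap_ge0 : forall P a b, 0 < dist3 P a -> 0 <= gap P a b.
Proof.
  intros P a b H. unfold gap.
  assert (Hd : dist3 b a = sqrt (dot (sub3 b a) (sub3 b a)))
    by (unfold dist3, dot, sub3; simpl; f_equal; ring).
  rewrite Hd. pose proof (cs_ge (unitv P a) (sub3 b a) (unit_norm P a H)). lra.
Qed.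

Lemma gap_zero : forall P a b, 0 < dist3 P a -> gap P a b = 0 ->
  sub3 b a = scal (dist3 b a) (unitv P a).
Proof.
  intros P a b H Hg. unfold gap in Hg.
  assert (Hn := unit_norm P a H).
  assert (Hs := dist_sq b a).
  set (u := unitv P a) in *. set (v := sub3 b a) in *. set (L := dist3 b a) in *.
  assert (Hz : (px v - L * px u)^2 + (py v - L * py u)^2 + (pz v - L * pz u)^2 = 0).
  { replace ((px v - L * px u)^2 + (py v - L * py u)^2 + (pz v - L * pz u)^2)
      with (dot v v - 2 * L * dot u v + L * L * dot u u) by (unfold dot; ring).
    rewrite Hn, <- Hs. replace (dot u v) with L by lra. ring. }
  clearbody u v L.
  pose proof (pow2_ge_0 (px v - L * px u)).
  pose proof (pow2_ge_0 (py v - L * py u)).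
  pose proof (pow2_ge_0 (pz v - L * pz u)).
  assert (E1 : px v = L * px u) by nra.
  assert (E2 : py v = L * py u) by nra.
  assert (E3 : pz v = L * pz u) by nra.
  destruct v as [v1 v2 v3]. unfold scal. simpl in *. rewrite E1, E2, E3. reflexivity.
Qed.

Lemma sum_identity : forall P a1 a2 a3 a4 b,
  0 < dist3 P a1 -> 0 < dist3 P a2 -> 0 < dist3 P a3 -> 0 < dist3 P a4 ->
  px (unitv P a1) + px (unitv P a2) + px (unitv P a3) + px (unitv P a4) = 0 ->
  py (unitv P a1) + py (unitv P a2) + py (unitv P a3) + py (unitv P a4) = 0 ->
  pz (unitv P a1) + pz (unitv P a2) + pz (unitv P a3) + pz (unitv P a4) = 0 ->
  ft_sum a1 a2 a3 a4 b - ft_sum a1 a2 a3 a4 P =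
    gap P a1 b + gap P a2 b + gap P a3 b + gap P a4 b.
Proof.
  intros P a1 a2 a3 a4 b H1 H2 H3 H4 Sx Sy Sz.
  assert (E : forall a, dot (unitv P a) (sub3 b a) =
     dot (unitv P a) (sub3 b P) + dot (unitv P a) (sub3 P a))
    by (intros; unfold dot, sub3; simpl; ring).
  unfold gap, ft_sum. rewrite !E.
  rewrite (unit_self P a1 H1), (unit_self P a2 H2), (unit_self P a3 H3), (unit_self P a4 H4).
  assert (Z : dot (unitv P a1) (sub3 b P) + dot (unitv P a2) (sub3 b P) +
              dot (unitv P a3) (sub3 b P) + dot (unitv P a4) (sub3 b P) = 0).
  { unfold dot.
    replace (px (unitv P a1) * px (sub3 b P) + py (unitv P a1) * py (sub3 b P) +
      pz (unitv P a1) * pz (sub3 b P) +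
      (px (unitv P a2) * px (sub3 b P) + py (unitv P a2) * py (sub3 b P) +
       pz (unitv P a2) * pz (sub3 b P)) +
      (px (unitv P a3) * px (sub3 b P) + py (unitv P a3) * py (sub3 b P) +
       pz (unitv P a3) * pz (sub3 b P)) +
      (px (unitv P a4) * px (sub3 b P) + py (unitv P a4) * py (sub3 b P) +
       pz (unitv P a4) * pz (sub3 b P)))
    with ((px (unitv P a1) + px (unitv P a2) + px (unitv P a3) + px (unitv P a4)) * px (sub3 b P)
        + (py (unitv P a1) + py (unitv P a2) + py (unitv P a3) + py (unitv P a4)) * py (sub3 b P)
        + (pz (unitv P a1) + pz (unitv P a2) + pz (unitv P a3) + pz (unitv P a4)) * pz (sub3 b P))
      by ring.
    rewrite Sx, Sy, Sz. ring. }
  lra.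
Qed.

Lemma root_exists : { x : R | 2/5 <= x <= 9/20 /\ cub x = 0 }.
Proof.
  destruct (IVT (fun z => - (2*z*z*z - 4*z*z - z + 1)) (2/5) (9/20)) as [x [Hx Hf]].
  - reg.
  - lra.
  - lra.
  - lra.
  - exists x. split; [exact Hx|]. unfold cub. lra.
Qed.

Definition A1 := P3 0 0 0.
Definition A2 := P3 2 0 0.
Definition A3 := P3 0 2 2.
Definition A4 := P3 0 2 (-2).

Lemma rat_IZR : forall n, is_rational (IZR n).
Proof. intros n. exists (inject_Z n). unfold Q2R; simpl. rewrite Rinv_1. ring. Qed.

Lemma main_aux : forall x, 2/5 <= x <= 9/20 -> cub x = 0 ->
  let P := P3 x (1-x) 0 in
  is_FT_point A1 A2 A3 A4 P /\
  (forall a0, is_FT_point A1 A2 A3 A4 a0 -> px a0 = x).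
Proof.
  intros x Hx Hc P.
  set (W := dist3 P A2).
  assert (HW : W * W = (x-2)*(x-2) + (1-x)*(1-x)).
  { unfold W. rewrite dist_sq. unfold dot, sub3, P, A2; simpl. ring. }
  assert (HWp : 0 < W).
  { assert (0 <= W) by apply dist_nonneg. nra. }
  assert (D1 : dist3 P A1 = x * W).
  { unfold dist3 at 1. apply sqrt_lem_1.
    - unfold P, A1; simpl. nra.
    - nra.
    - unfold P, A1; simpl.
      replace (x * W * (x * W)) with (x*x*(W*W)) by ring. rewrite HW.
      replace (x * x * ((x - 2) * (x - 2) + (1 - x) * (1 - x))) with
        ((x-0)^2 + (1-x-0)^2 + (0-0)^2 + (x-1) * cub x) by (unfold cub; ring).
      rewrite Hc. ring. }
  assert (D3 : dist3 P A3 = 2*x*W/(1-x)).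
  { unfold dist3 at 1. apply sqrt_lem_1.
    - unfold P, A3; simpl. nra.
    - apply Rmult_le_pos; [nra|]. apply Rlt_le, Rinv_0_lt_compat. lra.
    - unfold P, A3; simpl.
      replace (2 * x * W / (1 - x) * (2 * x * W / (1 - x))) with
        (4*x*x*(W*W)/((1-x)*(1-x))) by (field; lra). rewrite HW.
      apply (Rmult_eq_reg_l ((1-x)*(1-x))); [|nra].
      replace ((1 - x) * (1 - x) * (4 * x * x * ((x - 2) * (x - 2) + (1 - x) * (1 - x)) / ((1 - x) * (1 - x))))
        with (4 * x * x * ((x - 2) * (x - 2) + (1 - x) * (1 - x))) by (field; lra).
      replace (4 * x * x * ((x - 2) * (x - 2) + (1 - x) * (1 - x))) with
        ((1 - x) * (1 - x) * ((x - 0) ^ 2 + (1 - x - 2) ^ 2 + (0 - 2) ^ 2) + (3*x-5) * cub x)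
        by (unfold cub; ring).
      rewrite Hc. ring. }
  assert (D4 : dist3 P A4 = 2*x*W/(1-x)).
  { rewrite <- D3. unfold dist3, P, A3, A4; simpl. f_equal. ring. }
  assert (P1 : 0 < dist3 P A1) by (rewrite D1; nra).
  assert (P2 : 0 < dist3 P A2) by exact HWp.
  assert (P3' : 0 < dist3 P A3).
  { rewrite D3. apply Rmult_lt_0_compat; [nra|]. apply Rinv_0_lt_compat. lra. }
  assert (P4 : 0 < dist3 P A4) by (rewrite D4, <- D3; exact P3').
  assert (U : forall a, unitv P a = scal (/ dist3 P a) (sub3 P a)) by reflexivity.
  assert (Sx : px (unitv P A1) + px (unitv P A2) + px (unitv P A3) + px (unitv P A4) = 0).
  { rewrite !U. unfold scal; simpl. fold W. rewrite D1, D3, D4. unfold P, A1, A2, A3, A4; simpl.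
    field. split; lra. }
  assert (Sy : py (unitv P A1) + py (unitv P A2) + py (unitv P A3) + py (unitv P A4) = 0).
  { rewrite !U. unfold scal; simpl. fold W. rewrite D1, D3, D4. unfold P, A1, A2, A3, A4; simpl.
    field. split; lra. }
  assert (Sz : pz (unitv P A1) + pz (unitv P A2) + pz (unitv P A3) + pz (unitv P A4) = 0).
  { rewrite !U. unfold scal; simpl. fold W. rewrite D1, D3, D4. unfold P, A1, A2, A3, A4; simpl.
    field. split; lra. }
  assert (Id := fun b => sum_identity P A1 A2 A3 A4 b P1 P2 P3' P4 Sx Sy Sz).
  split.
  - intro b. specialize (Id b).
    pose proof (gap_ge0 P A1 b P1). pose proof (gap_ge0 P A2 b P2).
    pose proof (gap_ge0 P A3 b P3'). pose proof (gap_ge0 P A4 b P4). lra.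
  - intros a0 Ha0. specialize (Id a0). specialize (Ha0 P).
    pose proof (gap_ge0 P A1 a0 P1) as G1. pose proof (gap_ge0 P A2 a0 P2) as G2.
    pose proof (gap_ge0 P A3 a0 P3') as G3. pose proof (gap_ge0 P A4 a0 P4) as G4.
    assert (Z1 : gap P A1 a0 = 0) by lra.
    assert (Z2 : gap P A2 a0 = 0) by lra.
    apply gap_zero in Z1; [|exact P1]. apply gap_zero in Z2; [|exact P2].
    set (L1 := dist3 a0 A1) in *. set (L2 := dist3 a0 A2) in *.
    rewrite !U in Z1, Z2. fold W in Z2. rewrite D1 in Z1.
    unfold scal, sub3, P, A1, A2 in Z1, Z2. simpl in Z1, Z2.
    injection Z1 as Z1x Z1y _. injection Z2 as Z2x Z2y _.
    clearbody L1 L2 W.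
    assert (HL : L1 = x * L2).
    { assert (E : L1 * (/ (x * W) * (1 - x - 0)) = L2 * (/ W * (1 - x - 0))) by lra.
      replace (L1 * (/ (x * W) * (1 - x - 0))) with ((L1 - x*L2) * ((1-x)/(x*W)) + L2 * (/ W * (1 - x - 0))) in E by (field; split; lra).
      assert (E' : (L1 - x*L2) * ((1-x)/(x*W)) = 0) by lra.
      apply Rmult_integral in E'. destruct E' as [E'|E']; [lra|].
      exfalso. revert E'. apply Rgt_not_eq. apply Rmult_lt_0_compat; [lra|]. apply Rinv_0_lt_compat. nra. }
    subst L1.
    assert (E2 : L2 = W).
    { replace (x * L2 * (/ (x * W) * (x - 0))) with (L2 * / W * x) in Z1x by (field; split; lra).
      assert (E : L2 * / W * 2 = 2) by lra.
      apply (Rmult_eq_reg_r (/W)); [|apply Rgt_not_eq, Rinv_0_lt_compat; lra].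
      rewrite Rinv_r by lra. lra. }
    subst L2. replace (x * W * (/ (x * W) * (x - 0))) with x in Z1x by (field; split; lra). lra.
Qed.

Theorem mainTheorem3 :
  exists a1 a2 a3 a4 : point3,
    rational_point a1 /\ rational_point a2 /\ rational_point a3 /\ rational_point a4 /\
    non_coplanar a1 a2 a3 a4 /\
    (exists a0 : point3, is_FT_point a1 a2 a3 a4 a0) /\
    (forall a0 : point3, is_FT_point a1 a2 a3 a4 a0 -> ~ constructible_point a0).
Proof.
  destruct root_exists as [x [Hx Hc]].
  destruct (main_aux x Hx Hc) as [HP Huniq].
  exists A1, A2, A3, A4.
  split. { unfold rational_point, A1; simpl; repeat split; apply rat_IZR. }
  split. { unfold rational_point, A2; simpl; repeat split; apply rat_IZR. }
  split. { unfold rational_point, A3; simpl; repeat split; apply rat_IZR. }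
  split. { unfold rational_point, A4; simpl; repeat split; apply rat_IZR. }
  split. { unfold non_coplanar, det3, sub3, A1, A2, A3, A4; simpl. lra. }
  split. { eexists. exact HP. }
  intros a0 Ha0 [Hcx _].
  apply (cub_not_constructible x Hc). rewrite <- (Huniq a0 Ha0). exact Hcx.
Qed.
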